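(* For the modular data of the quantum double of $S_3$, the modular invariants $Z_{(21)},Z_{(61)},Z_{(3)},Z_{(4)},Z_{(1)},Z_{(12)},Z_{(2)},Z_{(16)}$ are nimless.
   Context: Primaries $0,\dots,7$, all self-conjugate, with $S=\frac16\begin{pmatrix}1&1&2&2&2&2&3&3\\1&1&2&2&2&2&-3&-3\\2&2&4&-2&-2&-2&0&0\\2&2&-2&4&-2&-2&0&0\\2&2&-2&-2&-2&4&0&0\\2&2&-2&-2&4&-2&0&0\\3&-3&0&0&0&0&3&-3\\3&-3&0&0&0&0&-3&3\end{pmatrix}$, $T=\mathrm{diag}(1,1,1,1,e^{2\pi i/3},e^{4\pi i/3},1,-1)$, fusion coefficients $N_{\lambda\mu}^\nu=\sum_\rho S_{\lambda\rho}S_{\mu\rho}\overline{S_{\nu\rho}}/S_{0\rho}$. Matrices are written as $\sum Z_{\lambda\mu}\chi_\lambda\chi_\mu^*$ (products of linear forms $st^*$ meaning the matrix of products of coefficients). $Z_{(1)}=|\chi_0+\chi_1+\chi_3|^2+\chi_2\chi_3^*+\chi_3\chi_2^*+|\chi_3|^2+|\chi_4|^2+|\chi_5|^2$; $Z_{(2)}=|\chi_0+\chi_1+\chi_3|^2+|\chi_2|^2+2|\chi_3|^2+|\chi_4|^2+|\chi_5|^2$; $Z_{(3)}=|\chi_0+\chi_1+\chi_2|^2+|\chi_2|^2+\chi_2\chi_3^*+\chi_3\chi_2^*+|\chi_4|^2+|\chi_5|^2$; $Z_{(4)}=|\chi_0+\chi_1+\chi_2|^2+2|\chi_2|^2+|\chi_3|^2+|\chi_4|^2+|\chi_5|^2$;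 $Z_{(21)}=(\chi_0+\chi_1+\chi_3)(\chi_0+\chi_1+\chi_2)^*+2\chi_3\chi_2^*+\chi_2\chi_3^*+|\chi_4|^2+|\chi_5|^2$, $Z_{(12)}=Z_{(21)}^t$; $Z_{(61)}=(\chi_0+\chi_1+\chi_3)(\chi_0+\chi_1+\chi_2)^*+\chi_3\chi_2^*+\chi_2\chi_2^*+|\chi_3|^2+|\chi_4|^2+|\chi_5|^2$, $Z_{(16)}=Z_{(61)}^t$. A nimrep of dimension $n$: non-negative integer $n\times n$ matrices $G_\lambda$ with $G_0=I$, $G_{\bar\lambda}=G_\lambda^t$, $G_\lambda G_\mu=\sum_\nu N_{\lambda\mu}^\nu G_\nu$. $\mathrm{Exp}(Z)$ is the multiset with $Z_{\mu\mu}$ copies of $\mu$. A nimrep matches $Z$ if $n=\mathrm{Tr}\,Z$ and the $G_\lambda$ are simultaneously unitarily diagonalisable with joint eigenvalues $(S_{\lambda\mu}/S_{0\mu})_\lambda$, $\mu$ running through $\mathrm{Exp}(Z)$ with multiplicity. $Z$ is nimless if no matching nimrep exists. *)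

(* Defs.v *)
From HB Require Import structures.
From mathcomp Require Import all_boot all_order all_algebra.
Set Implicit Arguments.
Unset Strict Implicit.
Unset Printing Implicit Defensive.
Import Order.TTheory GRing.Theory Num.Theory.
Local Open Scope ring_scope.

(* 6 * S *)
Definition S6_table : seq (seq int) :=
  [:: [:: 1; 1; 2; 2; 2; 2; 3; 3];
      [:: 1; 1; 2; 2; 2; 2; -3; -3];
      [:: 2; 2; 4; -2; -2; -2; 0; 0];
      [:: 2; 2; -2; 4; -2; -2; 0; 0];
      [:: 2; 2; -2; -2; -2; 4; 0; 0];
      [:: 2; 2; -2; -2; 4; -2; 0; 0];
      [:: 3; -3; 0; 0; 0; 0; 3; -3];
      [:: 3; -3; 0; 0; 0; 0; -3; 3]]%Z.

Definition Smat (i j : 'I_8) : rat :=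
  (nth 0 (nth [::] S6_table i) j)%:~R / 6%:R.

Definition zero8 : 'I_8 := ord0.

(* Fusion coefficients N_{lam mu}^nu = sum_rho S_{lam rho} S_{mu rho} conj(S_{nu rho}) / S_{0 rho}
   (S is real, so conjugation is the identity). *)
Definition fusN (lam mu nu : 'I_8) : rat :=
  \sum_(rho < 8) Smat lam rho * Smat mu rho * Smat nu rho / Smat zero8 rho.

Definition conjP (lam : 'I_8) : 'I_8 := lam.

Definition is_nimrep (n : nat) (G : 'I_8 -> 'M[int]_n) : Prop :=
  [/\ (forall lam i j, 0 <= G lam i j),
      G zero8 = 1%:M,
      (forall lam, G (conjP lam) = (G lam)^T) &
      (forall lam mu,
          map_mx intr (G lam *m G mu) =
          \sum_(nu < 8) fusN lam mu nu *: map_mx (intr : int -> rat) (G nu))].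

Definition modinv := 'I_8 -> 'I_8 -> nat.

Definition trZ (Z : modinv) : nat := (\sum_(i < 8) Z i i)%N.

(* Matching: with n = Tr Z, there is a unitary U over the (algebraically closed)
   complex field C and an enumeration e of Exp(Z) with multiplicity (mu occurs
   Z_{mu mu} times), such that U G_lam U^* = diag(S_{lam,e i}/S_{0,e i})_i. *)
Definition matches (C : numClosedFieldType) (Z : modinv)
    (G : 'I_8 -> 'M[int]_(trZ Z)) : Prop :=
  exists (e : 'I_(trZ Z) -> 'I_8),
    (forall mu, #|[pred i | e i == mu]| = Z mu mu) /\
    exists U : 'M[C]_(trZ Z),
      U *m (map_mx Num.conj U)^T = 1%:M /\
      forall lam,
        U *m map_mx intr (G lam) *m (map_mx Num.conj U)^T =
        diag_mx (\row_i (ratr (Smat lam (e i) / Smat zero8 (e i)) : C)).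

Arguments matches C Z G : clear implicits.

Definition nimless (C : numClosedFieldType) (Z : modinv) : Prop :=
  ~ exists G : 'I_8 -> 'M[int]_(trZ Z), is_nimrep G /\ matches C Z G.

Definition outer (s t : seq nat) : modinv :=
  fun i j => (((i : nat) \in s) && ((j : nat) \in t) : nat).
Definition ent (a b : nat) : modinv :=
  fun i j => (((i : nat) == a) && ((j : nat) == b) : nat).
Definition addZ (Z1 Z2 : modinv) : modinv := fun i j => (Z1 i j + Z2 i j)%N.
Definition sclZ (k : nat) (Z1 : modinv) : modinv := fun i j => (k * Z1 i j)%N.
Definition trpZ (Z1 : modinv) : modinv := fun i j => Z1 j i.

Local Infix "+Z" := addZ (at level 50, left associativity).

Definition Z1 : modinv := outer [:: 0; 1; 3] [:: 0; 1; 3]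
  +Z ent 2 3 +Z ent 3 2 +Z ent 3 3 +Z ent 4 4 +Z ent 5 5.
Definition Z2 : modinv := outer [:: 0; 1; 3] [:: 0; 1; 3]
  +Z ent 2 2 +Z sclZ 2 (ent 3 3) +Z ent 4 4 +Z ent 5 5.
Definition Z3 : modinv := outer [:: 0; 1; 2] [:: 0; 1; 2]
  +Z ent 2 2 +Z ent 2 3 +Z ent 3 2 +Z ent 4 4 +Z ent 5 5.
Definition Z4 : modinv := outer [:: 0; 1; 2] [:: 0; 1; 2]
  +Z sclZ 2 (ent 2 2) +Z ent 3 3 +Z ent 4 4 +Z ent 5 5.
Definition Z21 : modinv := outer [:: 0; 1; 3] [:: 0; 1; 2]
  +Z sclZ 2 (ent 3 2) +Z ent 2 3 +Z ent 4 4 +Z ent 5 5.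
Definition Z12 : modinv := trpZ Z21.
Definition Z61 : modinv := outer [:: 0; 1; 3] [:: 0; 1; 2]
  +Z ent 3 2 +Z ent 2 2 +Z ent 3 3 +Z ent 4 4 +Z ent 5 5.
Definition Z16 : modinv := trpZ Z61.

(* Main.v *)
Require Import Defs.
From HB Require Import structures.
From mathcomp Require Import all_boot all_order all_algebra.
From mathcomp Require Import zify ring.
From Stdlib Require Import PeanoNat.
Set Implicit Arguments.
Unset Strict Implicit.
Unset Printing Implicit Defensive.
Import Order.TTheory GRing.Theory Num.Theory.
Local Open Scope ring_scope.

Definition S6e (l m : 'I_8) : int := nth 0 (nth [::] S6_table l) m.

Lemma S6e0_neq0 m : S6e zero8 m != 0.
Proof. by case: m => [[|[|[|[|[|[|[|[|m]]]]]]]] H]. Qed.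

Lemma ratr_rr (C : numClosedFieldType) l m :
  (ratr (Smat l m / Smat zero8 m) : C) = (S6e l m)%:~R / (S6e zero8 m)%:~R.
Proof.
rewrite /Smat !fmorph_div !rmorph_int rmorph_nat -/(S6e l m) -/(S6e zero8 m).
have h6 : (6%:R : C) != 0 by rewrite pnatr_eq0.
have hb := S6e0_neq0 m. have hb2 : ((S6e zero8 m)%:~R : C) != 0 by rewrite intr_eq0. by field.
Qed.

Local Close Scope ring_scope.
Definition issq (x : nat) : bool := Nat.sqrt x * Nat.sqrt x == x.
Lemma issqP b : issq (b * b).
Proof. by rewrite /issq -multE Nat.sqrt_square. Qed.

Definition psq (l : seq nat) := all (fun x => all (fun y => issq (x * y)) l) l.

Lemma psq_perm l l' : perm_eq l l' -> psq l = psq l'.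
Proof.
move=> p; rewrite /psq (perm_all _ p); apply: eq_all => x.
exact: perm_all.
Qed.

Fixpoint chk (vals : seq nat) (q : pred nat) (k rem : nat) (prev : seq nat) : bool :=
  match k with
  | 0 => (rem != 0) || all q prev
  | k'.+1 => all (fun v => if rem < v then true else
                          if all (fun w => issq (v * w)) (v :: prev)
                          then chk vals q k' (rem - v) (v :: prev) else true) vals
  end.

Lemma chkP vals q k : forall rem prev s, chk vals q k rem prev -> size s = k ->
  all (mem vals) s -> sumn s = rem -> psq (s ++ prev) -> all q (s ++ prev).
Proof.
elim: k => [|k IH] rem prev s /=.
  by case: s => //= H _ _ hs _; move: H; rewrite -hs.
case: s => // v s H [sz] /andP[vin sin] sm ps.
have hc : all (fun w => issq (v * w)) (v :: prev).
  have hv := allP ps v (mem_head _ _).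
  apply/allP => w win; apply: (allP hv).
  by move: win; rewrite !inE mem_cat => /orP[->|->]; rewrite ?orbT.
have := allP H v vin.
case: ifP => [|_]; first by rewrite -sm ltnNge leq_addr.
case: ifP => [_ {}hc|/negP nh]; last by case: (nh hc).
have := IH (rem - v) (v :: prev) s hc sz sin.
rewrite -sm addKn => /(_ erefl).
have pp : perm_eq (s ++ v :: prev) ((v :: s) ++ prev) by rewrite perm_catC /= perm_cons perm_catC.
rewrite (psq_perm pp) (perm_all _ pp) => h; apply: h; exact: ps.
Qed.

Lemma chk_fun vals q n rem (a : 'I_n -> nat) :
  chk vals q n rem [::] -> (forall i, a i \in vals) -> (\sum_i a i)%N = rem ->
  (forall i j, issq (a i * a j)) -> forall i, q (a i).
Proof.
move=> H hv hs hq i.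
have := @chkP vals q n rem [::] [seq a i | i <- enum 'I_n] H.
rewrite size_map size_enum_ord cats0 => /(_ erefl).
have -> : all (mem vals) [seq a i | i <- enum 'I_n].
  by apply/allP => x /mapP [j _ ->]; exact: hv.
have -> : sumn [seq a i | i <- enum 'I_n] = rem by rewrite sumnE big_map big_enum.
have -> : psq [seq a i | i <- enum 'I_n].
  apply/allP => x /mapP [j _ ->]; apply/allP => y /mapP [k _ ->]; exact: hq.
move=> /(_ isT erefl isT) /allP; apply; apply/mapP; exists i => //; exact: mem_enum.
Qed.


Local Open Scope ring_scope.
Section Spec.
Variables (C : numClosedFieldType) (n : nat) (G : 'I_8 -> 'M[int]_n)
  (e : 'I_n -> 'I_8) (U : 'M[C]_n).
Local Notation Ut := ((map_mx Num.conj U)^T).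
Hypothesis HU : U *m Ut = 1%:M.
Hypothesis HD : forall lam, U *m map_mx intr (G lam) *m Ut =
  diag_mx (\row_i (ratr (Smat lam (e i) / Smat zero8 (e i)) : C)).

Definition T (f : 'I_8 -> C) : 'M[C]_n := Ut *m diag_mx (\row_i f (e i)) *m U.

Lemma TE f a b : T f a b = \sum_i Num.conj (U i a) * f (e i) * U i b.
Proof.
rewrite /T mul_mx_diag mxE; apply: eq_bigr => i _; by rewrite !mxE.
Qed.

Lemma UtU : Ut *m U = 1%:M.
Proof. exact: mulmx1C. Qed.

Lemma GT lam : map_mx intr (G lam) = T (fun m => (S6e lam m)%:~R / (S6e zero8 m)%:~R).
Proof.
have -> : map_mx intr (G lam) = Ut *m U *m map_mx intr (G lam) *m (Ut *m U).
  by have h := UtU; rewrite h mul1mx mulmx1.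
rewrite !mulmxA -(mulmxA Ut U) -(mulmxA Ut).
rewrite HD /T; congr (_ *m diag_mx _ *m _); apply/rowP => i; rewrite !mxE.
exact: ratr_rr.
Qed.

Lemma T_ext f g : (forall i, f (e i) = g (e i)) -> T f = T g.
Proof. move=> h; apply/matrixP => a b; rewrite !(TE f) !(TE g); apply: eq_bigr => i _; by rewrite h. Qed.

Lemma TM f g : T f *m T g = T (fun m => f m * g m).
Proof.
rewrite /T -!mulmxA (mulmxA U) HU mul1mx; congr (_ *m _).
rewrite !mulmxA; congr (_ *m _).
apply/matrixP => a b; rewrite mul_diag_mx !mxE.
by case: (eqVneq a b) => [->|nab]; rewrite ?mulr1n ?mulr0n ?mulr0.
Qed.

Lemma Ttr f : \tr (T f) = \sum_i f (e i).
Proof.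
rewrite /T mxtrace_mulC mulmxA HU mul1mx mxtrace_diag.
by apply: eq_bigr => i _; rewrite mxE.
Qed.

Lemma Tdiag_ge0 f a : (forall i, 0 <= f (e i)) -> 0 <= T f a a.
Proof.
move=> h; rewrite (TE f); apply: sumr_ge0 => i _.
rewrite mulrC mulrA; apply: mulr_ge0; first exact: mul_conjC_ge0.
exact: h.
Qed.

Lemma Trank1 f i0 al : (forall i, f (e i) = if i == i0 then al else 0) ->
  forall a b, T f a a * T f b b = T f a b * T f b a.
Proof.
move=> h a b.
have E c d : T f c d = Num.conj (U i0 c) * al * U i0 d.
  rewrite (TE f) (bigD1 i0) //= big1 ?addr0; first by rewrite h eqxx.
  by move=> i /negPf ni; rewrite h ni mulr0 mul0r.
rewrite !E; ring.
Qed.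

End Spec.
Definition comb n (G : 'I_8 -> 'M[int]_n) (c : 'I_8 -> int) : 'M[int]_n :=
  \sum_(l < 8) c l *: G l.
Definition sp (C : numClosedFieldType) (c : 'I_8 -> int) (m : 'I_8) : C :=
  \sum_(l < 8) (c l)%:~R * ((S6e l m)%:~R / (S6e zero8 m)%:~R).
Definition hspec (Z : modinv) (c k : 'I_8 -> int) :=
  forall m, (Z m m != 0)%N -> \sum_(l < 8) c l * S6e l m = k m * S6e zero8 m.

Lemma intr_sum' (R : pzRingType) (I : Type) (r : seq I) (P : pred I) (F : I -> int) :
  (\sum_(i <- r | P i) F i)%:~R = \sum_(i <- r | P i) (F i)%:~R :> R.
Proof. exact: (big_morph _ (@intrD R) (mulr0z 1)). Qed.

Lemma sp_val (C : numClosedFieldType) c m k :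
  \sum_(l < 8) c l * S6e l m = k * S6e zero8 m -> sp C c m = k%:~R.
Proof.
move=> h; rewrite /sp.
have -> : \sum_(l < 8) (c l)%:~R * ((S6e l m)%:~R / (S6e zero8 m)%:~R) =
    (\sum_(l < 8) c l * S6e l m)%:~R / (S6e zero8 m)%:~R :> C.
  rewrite intr_sum' mulr_suml; apply: eq_bigr => l _; by rewrite intrM mulrA.
by rewrite h intrM mulfK // intr_eq0; exact: S6e0_neq0.
Qed.

Lemma intr_mx_inj (C : numClosedFieldType) n (A B : 'M[int]_n) :
  map_mx (intr : int -> C) A = map_mx intr B -> A = B.
Proof.
move=> h; apply/matrixP => i j; move/matrixP: h => /(_ i j); rewrite !mxE.
exact: intr_inj.
Qed.

Section Nim.
Variables (C : numClosedFieldType) (Z : modinv).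
Local Notation n := (trZ Z).
Variables (G : 'I_8 -> 'M[int]_n) (e : 'I_n -> 'I_8) (U : 'M[C]_n).
Hypothesis Hnn : forall l i j, 0 <= G l i j.
Hypothesis HG0 : G zero8 = 1%:M.
Hypothesis Hsym : forall l, G l = (G l)^T.
Hypothesis Hcnt : forall mu, #|[pred i | e i == mu]| = Z mu mu.
Hypothesis HU : U *m (map_mx Num.conj U)^T = 1%:M.
Hypothesis HD : forall lam, U *m map_mx intr (G lam) *m (map_mx Num.conj U)^T =
  diag_mx (\row_i (ratr (Smat lam (e i) / Smat zero8 (e i)) : C)).

Lemma comb_entry c a b : comb G c a b = \sum_(l < 8) c l * G l a b.
Proof. by rewrite /comb summxE; apply: eq_bigr => l _; rewrite mxE. Qed.

Lemma comb_sym c a b : comb G c b a = comb G c a b.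
Proof.
rewrite !comb_entry; apply: eq_bigr => l _.
by rewrite [in RHS](Hsym l) mxE.
Qed.

Lemma combT c : map_mx intr (comb G c) = T e U (sp C c).
Proof.
apply/matrixP => a b; rewrite mxE comb_entry TE intr_sum'.
have E l : ((G l a b)%:~R : C) = T e U (fun m => (S6e l m)%:~R / (S6e zero8 m)%:~R) a b.
  by rewrite -(GT HU HD) mxE.
under eq_bigr => l _ do rewrite intrM E TE mulr_sumr.
rewrite exchange_big; apply: eq_bigr => i _ /=.
rewrite /sp mulr_sumr mulr_suml; apply: eq_bigr => l _; ring.
Qed.

Lemma Exp_ok i : (Z (e i) (e i) != 0)%N.
Proof.
apply/negP => /eqP h; move: (Hcnt (e i)); rewrite h => /card0_eq /(_ i).
by rewrite !inE eqxx.
Qed.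

Lemma hspec_sp c k : hspec Z c k -> forall i, sp C c (e i) = (k (e i))%:~R.
Proof. move=> h i; apply: sp_val; apply: h; exact: Exp_ok. Qed.

Lemma comb_ext c c' k : hspec Z c k -> hspec Z c' k -> comb G c = comb G c'.
Proof.
move=> h h'; apply: (@intr_mx_inj C); rewrite !combT; apply: T_ext => i.
by rewrite (hspec_sp h) (hspec_sp h').
Qed.

Lemma comb_mul c k c' k' c'' k'' : hspec Z c k -> hspec Z c' k' -> hspec Z c'' k'' ->
  (forall m, (Z m m != 0)%N -> k m * k' m = k'' m) ->
  comb G c *m comb G c' = comb G c''.
Proof.
move=> h h' h'' hk; apply: (@intr_mx_inj C).
rewrite map_mxM !combT (TM e HU); apply: T_ext => i.
by rewrite (hspec_sp h) (hspec_sp h') (hspec_sp h'') -intrM hk // Exp_ok.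
Qed.

Lemma sum_count (k : 'I_8 -> int) :
  \sum_(i < n) k (e i) = \sum_(m < 8) k m * (Z m m)%:R.
Proof.
have -> : \sum_(i < n) k (e i) = \sum_(i < n) \sum_(m < 8) (e i == m)%:R * k m.
  apply: eq_bigr => i _; rewrite (bigD1 (e i)) //= eqxx mul1r big1 ?addr0 //.
  by move=> m /negPf; rewrite eq_sym => ->; rewrite mul0r.
rewrite exchange_big; apply: eq_bigr => m _.
rewrite -mulr_suml mulrC -Hcnt; congr (_ * _).
rewrite -sum1_card natr_sum [RHS]big_mkcond /=; apply: eq_bigr => i _.
by rewrite inE; case: (e i == m).
Qed.

Lemma comb_tr c k : hspec Z c k ->
  \sum_(a < n) comb G c a a = \sum_(m < 8) k m * (Z m m)%:R.
Proof.
move=> h; rewrite -sum_count; apply: (@intr_inj C).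
rewrite !intr_sum'.
have := Ttr e HU (sp C c); rewrite -combT /mxtrace => E.
rewrite (eq_bigr (fun a => map_mx intr (comb G c) a a)); last by move=> a _; rewrite mxE.
rewrite E; apply: eq_bigr => i _; exact: hspec_sp.
Qed.

Lemma comb_psd c k a : hspec Z c k -> (forall m, 0 <= k m) -> 0 <= comb G c a a.
Proof.
move=> h hk; have E : (comb G c a a)%:~R = T e U (sp C c) a a :> C by rewrite -combT mxE.
rewrite -(ler0z C) E.
apply: Tdiag_ge0 => i; rewrite (hspec_sp h) ler0z; exact: hk.
Qed.

Lemma comb_rank1 c al : Z zero8 zero8 = 1%N ->
  hspec Z c (fun m => al * (m == zero8)%:R) ->
  forall a b, comb G c a a * comb G c b b = comb G c a b ^+ 2.
Proof.
move=> h1 h a b.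
have [i0 Hi0] : exists i0, forall i, (e i == zero8) = (i == i0).
  have /card1P [x hx] : #|[pred i | e i == zero8]| == 1%N by rewrite Hcnt h1.
  by exists x => i; move: (hx i); rewrite !inE.
have R := @Trank1 C n e U (sp C c) i0 al%:~R.
rewrite expr2 -{2}(comb_sym c a b); apply: (@intr_inj C); rewrite !intrM.
have E x y : (comb G c x y)%:~R = T e U (sp C c) x y :> C by rewrite -combT mxE.
rewrite !E; apply: R => i.
rewrite (hspec_sp h) -Hi0; case: (e i == zero8); by rewrite ?mulr1 ?mulr0.
Qed.

Lemma comb_ge0 c a b : (forall l, 0 <= c l) -> 0 <= comb G c a b.
Proof.
move=> h; rewrite comb_entry; apply: sumr_ge0 => l _; apply: mulr_ge0; [exact: h|exact: Hnn].
Qed.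

Lemma comb_diag_ge1 c a : c zero8 = 1 -> (forall l, 0 <= c l) -> 1 <= comb G c a a.
Proof.
move=> h0 h; rewrite comb_entry (bigD1 zero8) //= h0 HG0 mxE eqxx mul1r.
rewrite lerDl; apply: sumr_ge0 => l _; apply: mulr_ge0; [exact: h|exact: Hnn].
Qed.

Lemma tr_ind c (al : int) (m0 : 'I_8) : hspec Z c (fun m => al * (m == m0)%:R) ->
  \sum_(a < n) comb G c a a = al * (Z m0 m0)%:R.
Proof.
move=> hs; rewrite (comb_tr hs) (bigD1 m0) //= eqxx mulr1 big1 ?addr0 //.
by move=> m /negPf ->; rewrite mulr0 mul0r.
Qed.

Lemma diag_chk c al vals q : Z zero8 zero8 = 1%N ->
  hspec Z c (fun m => al * (m == zero8)%:R) -> (forall l, 0 <= c l) ->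
  (forall i, `|comb G c i i|%N \in vals) ->
  chk vals q n `|al|%N [::] -> forall i, q `|comb G c i i|%N.
Proof.
move=> h1 hs hc hv hk.
have tr : \sum_(a < n) comb G c a a = al by rewrite (tr_ind hs) h1 mulr1.
apply: (chk_fun hk hv).
  have E : Posz (\sum_i `|comb G c i i|%N) = al.
    rewrite (big_morph Posz PoszD (erefl (Posz 0))) -tr; apply: eq_bigr => i _.
    by apply: gez0_abs; apply: comb_ge0.
  by rewrite -E.
move=> i j; rewrite -abszM (comb_rank1 h1 hs) expr2 abszM; exact: issqP.
Qed.

Lemma diag_le c al a : hspec Z c (fun m => al * (m == zero8)%:R) -> (forall l, 0 <= c l) ->
  Z zero8 zero8 = 1%N -> comb G c a a <= al.
Proof.
move=> hs hc h1; rewrite -[al]mulr1 -[1]/((1%N)%:R) -h1 -(tr_ind hs) (bigD1 a) //=.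
rewrite lerDl; apply: sumr_ge0 => b _; exact: comb_ge0.
Qed.

Lemma hv_iota c (S : nat) : Z zero8 zero8 = 1%N ->
  hspec Z c (fun m => S%:Z * (m == zero8)%:R) -> c zero8 = 1 -> (forall l, 0 <= c l) ->
  forall i, `|comb G c i i|%N \in iota 1 S.
Proof.
move=> h1 hs c0 hc.
move=> i; rewrite mem_iota.
have g1 := comb_diag_ge1 i c0 hc.
have g2 := diag_le i hs hc h1.
apply/andP; split.
  by rewrite -(ler_nat int) !natz gez0_abs // (le_trans _ g1).
rewrite add1n ltnS -(ler_nat int) !natz gez0_abs; last exact: (le_trans _ g1).
exact: g2.
Qed.

Lemma case_pred0 c (S : nat) : Z zero8 zero8 = 1%N ->
  hspec Z c (fun m => S%:Z * (m == zero8)%:R) -> c zero8 = 1 -> (forall l, 0 <= c l) ->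
  chk (iota 1 S) pred0 n S [::] -> (0 < n)%N -> False.
Proof.
move=> h1 hs c0 hc hk n0.
have hv := hv_iota h1 hs c0 hc.
have := @diag_chk c S%:Z (iota 1 S) pred0 h1 hs hc hv.
by rewrite absz_nat => /(_ hk (Ordinal n0)).
Qed.

Lemma z2sq (y : 'Z_2) : y * y = y.
Proof. by case: y => [[|[|k]] H] //; apply/val_inj. Qed.
Lemma z2_9 : (9%:~R : 'Z_2) = 1. Proof. by apply/val_inj. Qed.

Lemma parity (Cm X : 'M[int]_n) (t : int) :
  (forall a b, X a b = t) -> t != 0 -> Cm *m X = 0 ->
  (forall a, \sum_j Cm a j * Cm j a = 9 * Cm a a) ->
  (forall a b, Cm a b = Cm b a) -> \sum_a Cm a a = 9 -> False.
Proof.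
move=> hX ht h0 hsq hsy htr.
have rows a : \sum_j Cm a j = 0.
  move/matrixP: h0 => /(_ a a); rewrite !mxE.
  under eq_bigr => j _ do rewrite hX.
  by rewrite -mulr_suml => /eqP; rewrite mulf_eq0 (negPf ht) orbF => /eqP.
have diag a : ((Cm a a)%:~R : 'Z_2) = 0.
  have := congr1 (fun x => (x%:~R : 'Z_2)) (hsq a).
  rewrite /= intrM z2_9 mul1r => <-.
  rewrite intr_sum'; under eq_bigr => j _ do rewrite intrM -(hsy a j) z2sq.
  by rewrite -intr_sum' rows.
have := congr1 (fun x => (x%:~R : 'Z_2)) htr.
by rewrite /= intr_sum' big1 // z2_9.
Qed.

Definition o4 : 'I_8 := @Ordinal 8 4 erefl.
Definition cf (s : seq int) : 'I_8 -> int := fun l => nth 0 s l.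
Definition c4 := cf [:: 1; 1; -1; -1; -1; 2; 0; 0].
Definition k4 (m : 'I_8) : int := 9 * (m == o4)%:R.

Lemma hspec_c4 : hspec Z c4 k4.
Proof.
move=> [[|[|[|[|[|[|[|[|m]]]]]]]] H] // _; rewrite !big_ord_recl big_ord0;
  vm_compute; reflexivity.
Qed.

Lemma hspec_c9 : hspec Z (fun l => 9 * c4 l) (fun m => 9 * k4 m).
Proof.
move=> [[|[|[|[|[|[|[|[|m]]]]]]]] H] // _; rewrite !big_ord_recl big_ord0;
  vm_compute; reflexivity.
Qed.

Lemma hspec_c0 : hspec Z (fun _ => 0) (fun _ => 0).
Proof. by move=> m _; rewrite big1 ?mul0r // => l _; rewrite mul0r. Qed.

Lemma case_par c (S t : nat) vals : Z zero8 zero8 = 1%N -> Z o4 o4 = 1%N ->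
  hspec Z c (fun m => S%:Z * (m == zero8)%:R) -> (forall l, 0 <= c l) ->
  (forall i, `|comb G c i i|%N \in vals) ->
  chk vals (pred1 t) n S [::] -> (0 < t)%N -> False.
Proof.
move=> h1 h4 hs hc hv hk t0.
have hd := @diag_chk c S%:Z vals (pred1 t) h1 hs hc hv.
rewrite absz_nat in hd; have {}hd := hd hk.
have hdi i : comb G c i i = t%:Z.
  by rewrite -(gez0_abs (comb_ge0 i i hc)); move/eqP: (hd i) => ->.
have hX a b : comb G c a b = t%:Z.
  have := comb_rank1 h1 hs a b; rewrite !hdi => /eqP.
  rewrite -expr2 eq_sym eqrXn2 //; first by move/eqP.
  exact: comb_ge0.
apply: (@parity (comb G c4) (comb G c) t%:Z hX).
- by rewrite -lt0n.
- rewrite (comb_mul hspec_c4 hs hspec_c0).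
    by apply/matrixP => a b; rewrite comb_entry big1 ?mxE // => l _; rewrite mul0r.
  move=> [[|[|[|[|[|[|[|[|?]]]]]]]] ?] _ //=; by rewrite /k4 /= ?mulr0 ?mul0r.
- move=> a.
  have hk4 : forall m, (Z m m != 0)%N -> k4 m * k4 m = 9 * k4 m.
    by move=> m _; rewrite /k4; case: (m == o4); rewrite /= ?mulr1 ?mulr0.
  have := comb_mul hspec_c4 hspec_c4 hspec_c9 hk4.
  move=> /matrixP /(_ a a); rewrite mxE => ->.
  by rewrite !comb_entry mulr_sumr; apply: eq_bigr => l _; rewrite mulrA.
- by move=> a b; rewrite comb_sym.
- by rewrite (tr_ind (m0 := o4) hspec_c4) h4 mulr1.
Qed.

End Nim.

Ltac hsp := move=> [[|[|[|[|[|[|[|[|?]]]]]]]] ?] //; let hz := fresh "hz" in intro hz;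
  rewrite !big_ord_recl big_ord0;
  first [ (vm_compute; reflexivity) | (vm_compute in hz; discriminate hz) ].

Ltac cge0 := move=> [[|[|[|[|[|[|[|[|?]]]]]]]] ?] //.

Lemma trZ21 : trZ Z21 = 4%N. Proof. by rewrite /trZ !big_ord_recl big_ord0. Qed.
Lemma trZ12 : trZ Z12 = 4%N. Proof. by rewrite /trZ !big_ord_recl big_ord0. Qed.
Lemma trZ4 : trZ Z4 = 8%N. Proof. by rewrite /trZ !big_ord_recl big_ord0. Qed.
Lemma trZ2 : trZ Z2 = 8%N. Proof. by rewrite /trZ !big_ord_recl big_ord0. Qed.
Lemma trZ3 : trZ Z3 = 6%N. Proof. by rewrite /trZ !big_ord_recl big_ord0. Qed.
Lemma trZ1 : trZ Z1 = 6%N. Proof. by rewrite /trZ !big_ord_recl big_ord0. Qed.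
Lemma trZ61 : trZ Z61 = 6%N. Proof. by rewrite /trZ !big_ord_recl big_ord0. Qed.
Lemma trZ16 : trZ Z16 = 6%N. Proof. by rewrite /trZ !big_ord_recl big_ord0. Qed.

Lemma chk4 : chk (iota 1 6) pred0 4 6 [::]. Proof. vm_compute; reflexivity. Qed.
Lemma chk8 : chk (iota 1 18) pred0 8 18 [::]. Proof. vm_compute; reflexivity. Qed.
Lemma chk6a : chk (iota 1 6) (pred1 1) 6 6 [::]. Proof. vm_compute; reflexivity. Qed.
Lemma chk6b : chk [:: 1; 2; 3; 5; 6; 9] (pred1 3) 6 18 [::]. Proof. vm_compute; reflexivity. Qed.

Definition x8 := cf [:: 1; 0; 1; 1; 1; 1; 3; 0].
Definition x2 := cf [:: 1; 0; 1; 0; 0; 0; 1; 0].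
Definition x3 := cf [:: 1; 0; 0; 1; 0; 0; 1; 0].

Lemma nim_pred0 (C : numClosedFieldType) (Z : modinv) c (S : nat) :
  Z zero8 zero8 = 1%N -> hspec Z c (fun m => S%:Z * (m == zero8)%:R) ->
  c zero8 = 1 -> (forall l, 0 <= c l) -> chk (iota 1 S) pred0 (trZ Z) S [::] ->
  (0 < trZ Z)%N -> nimless C Z.
Proof.
move=> h1 hs c0 hc hk n0 [G [[Hnn HG0 Hsym _] [e [Hcnt [U [HU HD]]]]]].
exact: (case_pred0 Hnn HG0 Hsym Hcnt HU HD h1 hs c0 hc hk n0).
Qed.

Lemma nim_par (C : numClosedFieldType) (Z : modinv) c (S : nat) :
  Z zero8 zero8 = 1%N -> Z o4 o4 = 1%N -> hspec Z c (fun m => S%:Z * (m == zero8)%:R) ->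
  c zero8 = 1 -> (forall l, 0 <= c l) -> chk (iota 1 S) (pred1 1) (trZ Z) S [::] ->
  nimless C Z.
Proof.
move=> h1 h4 hs c0 hc hk [G [[Hnn HG0 Hsym _] [e [Hcnt [U [HU HD]]]]]].
have hv := hv_iota Hnn HG0 Hcnt HU HD h1 hs c0 hc.
exact: (case_par Hnn Hsym Hcnt HU HD h1 h4 hs hc hv hk).
Qed.

Lemma nim21 C : nimless C Z21.
Proof.
apply: (@nim_pred0 C Z21 x2 6) => //; [hsp|cge0|by rewrite trZ21 chk4|by rewrite trZ21].
Qed.
Lemma nim12 C : nimless C Z12.
Proof.
apply: (@nim_pred0 C Z12 x2 6) => //; [hsp|cge0|by rewrite trZ12 chk4|by rewrite trZ12].
Qed.
Lemma nim4 C : nimless C Z4.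
Proof.
apply: (@nim_pred0 C Z4 x8 18) => //; [hsp|cge0|by rewrite trZ4 chk8|by rewrite trZ4].
Qed.
Lemma nim2 C : nimless C Z2.
Proof.
apply: (@nim_pred0 C Z2 x8 18) => //; [hsp|cge0|by rewrite trZ2 chk8|by rewrite trZ2].
Qed.
Lemma nim3 C : nimless C Z3.
Proof.
apply: (@nim_par C Z3 x3 6) => //; [hsp|cge0|by rewrite trZ3 chk6a].
Qed.
Lemma nim1 C : nimless C Z1.
Proof.
apply: (@nim_par C Z1 x2 6) => //; [hsp|cge0|by rewrite trZ1 chk6a].
Qed.

Lemma sum8 (F : 'I_8 -> int) : \sum_(l < 8) F l =
  F zero8 + F (@Ordinal 8 1 erefl) + F (@Ordinal 8 2 erefl) + F (@Ordinal 8 3 erefl)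
  + F (@Ordinal 8 4 erefl) + F (@Ordinal 8 5 erefl) + F (@Ordinal 8 6 erefl)
  + F (@Ordinal 8 7 erefl).
Proof.
rewrite !big_ord_recl big_ord0 addr0 !addrA.
by repeat (congr (_ + _)); congr F; apply: val_inj.
Qed.

Definition d0 := cf [:: 1; 0; 0; 0; 0; 0; 0; 0].
Definition d1 := cf [:: 0; 1; 0; 0; 0; 0; 0; 0].
Definition d6 := cf [:: 0; 0; 0; 0; 0; 0; 1; 0].
Definition k6 := cf [:: 3; -3; 0; 0; 0; 0; 1; -1].
Definition cc2 := cf [:: 1; 1; 2; -1; -1; -1; 0; 0].
Definition cc3 := cf [:: 1; 1; -1; 2; -1; -1; 0; 0].
Definition cc5 := cf [:: 1; 1; -1; -1; 2; -1; 0; 0].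
Definition kk (j : nat) (m : 'I_8) : int := 9 * (val m == j)%:R.

Section Row.
Variables (C : numClosedFieldType) (Z : modinv).
Local Notation n := (trZ Z).
Variables (G : 'I_8 -> 'M[int]_n) (e : 'I_n -> 'I_8) (U : 'M[C]_n).
Hypothesis Hnn : forall l i j, 0 <= G l i j.
Hypothesis HG0 : G zero8 = 1%:M.
Hypothesis Hsym : forall l, G l = (G l)^T.
Hypothesis Hcnt : forall mu, #|[pred i | e i == mu]| = Z mu mu.
Hypothesis HU : U *m (map_mx Num.conj U)^T = 1%:M.
Hypothesis HD : forall lam, U *m map_mx intr (G lam) *m (map_mx Num.conj U)^T =
  diag_mx (\row_i (ratr (Smat lam (e i) / Smat zero8 (e i)) : C)).

Lemma row61 :
  hspec Z d0 (fun _ => 1) -> hspec Z d1 (fun _ => 1) ->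
  hspec Z d6 k6 -> \sum_(m < 8) k6 m * (Z m m)%:R = 0 ->
  hspec Z cc2 (kk 2) -> hspec Z cc3 (kk 3) -> hspec Z c4 (kk 4) -> hspec Z cc5 (kk 5) ->
  forall i, `|comb G x8 i i|%N \in [:: 1; 2; 3; 5; 6; 9]%N.
Proof.
move=> h0 h1 h6 t6 s2 s3 s4 s5 i.
have E01 := comb_ext Hcnt HU HD h1 h0.
have e01 : comb G d1 i i = comb G d0 i i by rewrite E01.
have p2 := comb_psd Hcnt HU HD i s2 (fun m => mulr_ge0 (ler0n _ 9) (ler0n _ _)).
have p3 := comb_psd Hcnt HU HD i s3 (fun m => mulr_ge0 (ler0n _ 9) (ler0n _ _)).
have p4 := comb_psd Hcnt HU HD i s4 (fun m => mulr_ge0 (ler0n _ 9) (ler0n _ _)).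
have p5 := comb_psd Hcnt HU HD i s5 (fun m => mulr_ge0 (ler0n _ 9) (ler0n _ _)).
have z6 : comb G d6 i i = 0.
  have tr := comb_tr Hcnt HU HD h6; rewrite t6 in tr.
  apply: (psumr_eq0P _ tr) => // a _; apply: comb_ge0 => //.
  by move=> [[|[|[|[|[|[|[|[|?]]]]]]]] ?].
have g0 : G zero8 i i = 1 by rewrite HG0 mxE eqxx.
have n1 := Hnn (@Ordinal 8 1 erefl) i i.
have n2 := Hnn (@Ordinal 8 2 erefl) i i.
have n3 := Hnn (@Ordinal 8 3 erefl) i i.
have n4 := Hnn (@Ordinal 8 4 erefl) i i.
have n5 := Hnn (@Ordinal 8 5 erefl) i i.
have n6 := Hnn (@Ordinal 8 6 erefl) i i.
have n7 := Hnn (@Ordinal 8 7 erefl) i i.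
have : comb G x8 i i = 1 \/ comb G x8 i i = 2 \/ comb G x8 i i = 3 \/
       comb G x8 i i = 5 \/ comb G x8 i i = 6 \/ comb G x8 i i = 9.
  move: e01 p2 p3 p4 p5 z6; rewrite !comb_entry !sum8 /x8 /d0 /d1 /d6 /cc2 /cc3 /c4 /cc5 /cf /=.
  move=> e01 p2 p3 p4 p5 z6; lia.
by case=> [->|[->|[->|[->|[->|->]]]]].
Qed.

End Row.

Lemma nim_61gen (C : numClosedFieldType) (Z : modinv) :
  Z zero8 zero8 = 1%N -> Z o4 o4 = 1%N ->
  hspec Z x8 (fun m => 18%:Z * (m == zero8)%:R) ->
  hspec Z d0 (fun _ => 1) -> hspec Z d1 (fun _ => 1) ->
  hspec Z d6 k6 -> \sum_(m < 8) k6 m * (Z m m)%:R = 0 ->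
  hspec Z cc2 (kk 2) -> hspec Z cc3 (kk 3) -> hspec Z c4 (kk 4) -> hspec Z cc5 (kk 5) ->
  chk [:: 1; 2; 3; 5; 6; 9]%N (pred1 3%N) (trZ Z) 18 [::] ->
  nimless C Z.
Proof.
move=> h1 h4 hs h0 h1' h6 t6 s2 s3 s4 s5 hk [G [[Hnn HG0 Hsym _] [e [Hcnt [U [HU HD]]]]]].
have hv := row61 Hnn HG0 Hcnt HU HD h0 h1' h6 t6 s2 s3 s4 s5.
have hc : forall l, 0 <= x8 l by move=> [[|[|[|[|[|[|[|[|?]]]]]]]] ?].
exact: (case_par Hnn Hsym Hcnt HU HD h1 h4 hs hc hv hk).
Qed.

Lemma nim61 C : nimless C Z61.
Proof.
apply: nim_61gen => //; try hsp.
- by rewrite !big_ord_recl big_ord0.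
- by rewrite trZ61 chk6b.
Qed.

Lemma nim16 C : nimless C Z16.
Proof.
apply: nim_61gen => //; try hsp.
- by rewrite !big_ord_recl big_ord0.
- by rewrite trZ16 chk6b.
Qed.

Theorem proposition6p2 (C : numClosedFieldType) :
  nimless C Z21 /\ nimless C Z61 /\ nimless C Z3 /\ nimless C Z4 /\
  nimless C Z1 /\ nimless C Z12 /\ nimless C Z2 /\ nimless C Z16.
Proof.
split; first exact: nim21. split; first exact: nim61. split; first exact: nim3.
split; first exact: nim4. split; first exact: nim1. split; first exact: nim12.
split; first exact: nim2. exact: nim16.
Qed.
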